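(* Let $S(t,x,y,u,v)=\sum_\pi t^{|\pi|}x^{\mathrm{lmax}(\pi)}y^{\mathrm{rmax}(\pi)}u^{\mathrm{lmin}(\pi)}v^{\mathrm{rmin}(\pi)}$ over all separable permutations, and $I(t,x,y,u,v)$ the same sum over irreducible separable permutations. Let $S(t,y,u,v)=\sum_\pi t^{|\pi|}y^{\mathrm{rmax}(\pi)}u^{\mathrm{lmin}(\pi)}v^{\mathrm{rmin}(\pi)}$ and $S(t,x,u,v)=\sum_\pi t^{|\pi|}x^{\mathrm{lmax}(\pi)}u^{\mathrm{lmin}(\pi)}v^{\mathrm{rmin}(\pi)}$, both over all separable permutations. Let $S(t,z)=\sum_\pi t^{|\pi|}z^{\mathrm{rmax}(\pi)}$ over all separable permutations, and $$E(t,z_1,z_2,z_3)=z_1z_2z_3t+\frac{(S(t,z_1)+1)(S(t,z_2)+1)(S(t,z_3)+1)\,t^2z_1^2z_2z_3}{(1-S(t,z_1)S(t,z_3))(1-S(t,z_1)S(t,z_2))}.$$ Then $$I(t,x,y,u,v)=xyuvt+E(t,x,y,u)\,S(t,y,u,v),$$ the corresponding sum over reducible separable permutations equals $E(t,y,x,v)\,S(t,x,u,v)$, and $$S(t,x,y,u,v)=xyuvt+E(t,x,y,u)\,S(t,y,u,v)+E(t,y,x,v)\,S(t,x,u,v).$$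
   Context: A permutation of length $n$ is a word $\pi=\pi_1\cdots\pi_n$ containing each element of $[n]$ exactly once; $|\pi|=n$. For $\pi$ of length $m$, $\sigma$ of length $n$: $\pi\oplus\sigma=\pi_1\cdots\pi_m(\sigma_1+m)\cdots(\sigma_n+m)$, $\pi\ominus\sigma=(\pi_1+n)\cdots(\pi_m+n)\sigma_1\cdots\sigma_n$. Separable permutations are those of length $\ge1$ obtained from $1$ by repeatedly applying $\oplus,\ominus$ (equivalently, avoiding $2413$ and $3142$). The permutation $1$ is irreducible; a permutation of length $n\ge2$ is irreducible if there is no $i$, $2\le i\le n$, such that every element of $\pi_1\cdots\pi_{i-1}$ is less than every element of $\pi_i\cdots\pi_n$; reducible means not irreducible (length $\ge2$). $\pi_i$ is a left-to-right maximum (minimum) if $\pi_i>\pi_j$ ($\pi_i<\pi_j$) for all $j<i$, a right-to-left maximum (minimum) if $\pi_i>\pi_j$ ($\pi_i<\pi_j$) for all $j>i$; $\mathrm{lmax},\mathrm{lmin},\mathrm{rmax},\mathrm{rmin}$ count these. *)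

(* Defs.v *)
From mathcomp Require Import all_boot all_order all_algebra all_fingroup.
Set Implicit Arguments. Unset Strict Implicit. Unset Printing Implicit Defensive.
Import GRing.Theory.
Local Open Scope ring_scope.

(* ---------- Formal power series in t over a commutative ring R:
   a series is its coefficient sequence  nat -> R  (coefficient of t^n). *)
Section FPS.
Variable R : comRingType.

Definition fps_add (f g : nat -> R) : nat -> R := fun n => f n + g n.
Definition fps_mul (f g : nat -> R) : nat -> R :=
  fun n => \sum_(i < n.+1) f i * g (n - i)%N.
Definition fps_const (c : R) : nat -> R := fun n => if n == 0%N then c else 0.
Definition fps_mono (c : R) (k : nat) : nat -> R :=
  fun n => if n == k then c else 0.
Definition fps_pow (f : nat -> R) (k : nat) : nat -> R :=
  iter k (fps_mul f) (fps_const 1).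
(* 1/(1 - f) as the geometric series sum_k f^k; meaningful (and the
   unique inverse of 1 - f) when f has zero constant term, since then
   f^k has no terms of degree < k. *)
Definition fps_inv_1m (f : nat -> R) : nat -> R :=
  fun n => \sum_(k < n.+1) fps_pow f k n.
End FPS.

(* ---------- Permutations of length n are elements of 'S_n (on 'I_n,
   values 0..n-1, i.e. the paper's pi_i shifted by one). *)
Section Perms.
Variable n : nat.
Implicit Type p : 'S_n.

Definition lmax p : nat :=
  #|[set i : 'I_n | [forall j : 'I_n, (j < i)%N ==> (p j < p i)%N]]|.
Definition rmax p : nat :=
  #|[set i : 'I_n | [forall j : 'I_n, (i < j)%N ==> (p j < p i)%N]]|.
Definition lmin p : nat :=
  #|[set i : 'I_n | [forall j : 'I_n, (j < i)%N ==> (p i < p j)%N]]|.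
Definition rmin p : nat :=
  #|[set i : 'I_n | [forall j : 'I_n, (i < j)%N ==> (p i < p j)%N]]|.

Definition contains2413 p : bool :=
  [exists i : 'I_n, exists j : 'I_n, exists k : 'I_n, exists l : 'I_n,
     [&& (i < j)%N, (j < k)%N, (k < l)%N,
         (p k < p i)%N, (p i < p l)%N & (p l < p j)%N]].
Definition contains3142 p : bool :=
  [exists i : 'I_n, exists j : 'I_n, exists k : 'I_n, exists l : 'I_n,
     [&& (i < j)%N, (j < k)%N, (k < l)%N,
         (p j < p l)%N, (p l < p i)%N & (p i < p k)%N]].

Definition separable p : bool :=
  [&& (0 < n)%N, ~~ contains2413 p & ~~ contains3142 p].

(* irreducible: p = 1, or length >= 2 and no split point k (1 <= k <= n-1,
   the paper's i = k+1) with every entry before position k smaller than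
   every entry from position k on. *)
Definition irreducible p : bool :=
  (n == 1%N) ||
  ((1 < n)%N &&
   ~~ [exists k : 'I_n, (0 < k)%N &&
        [forall a : 'I_n, forall b : 'I_n,
           ((a < k)%N && (k <= b)%N) ==> (p a < p b)%N]]).
Definition reducible p : bool := (1 < n)%N && ~~ irreducible p.
End Perms.

Section GF.
Variable R : comRingType.

Definition weight n (p : 'S_n) (x y u v : R) : R :=
  x ^+ lmax p * y ^+ rmax p * u ^+ lmin p * v ^+ rmin p.

Definition Sgf (x y u v : R) : nat -> R :=
  fun n => \sum_(p : 'S_n | separable p) weight p x y u v.
Definition Igf (x y u v : R) : nat -> R :=
  fun n => \sum_(p : 'S_n | separable p && irreducible p) weight p x y u v.
Definition Rgf (x y u v : R) : nat -> R :=
  fun n => \sum_(p : 'S_n | separable p && reducible p) weight p x y u v.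

Definition S_yuv (y u v : R) : nat -> R := Sgf 1 y u v.
Definition S_xuv (x u v : R) : nat -> R := Sgf x 1 u v.
Definition S_z (z : R) : nat -> R := Sgf 1 z 1 1.

Definition Egf (z1 z2 z3 : R) : nat -> R :=
  let one := fps_const (1 : R) in
  let s1 := S_z z1 in let s2 := S_z z2 in let s3 := S_z z3 in
  fps_add (fps_mono (z1 * z2 * z3) 1)
    (fps_mul
      (fps_mul
        (fps_mul (fps_mul (fps_add s1 one) (fps_add s2 one)) (fps_add s3 one))
        (fps_mono (z1 ^+ 2 * z2 * z3) 2))
      (fps_mul (fps_inv_1m (fps_mul s1 s3)) (fps_inv_1m (fps_mul s1 s2)))).
End GF.

(* Main.v *)
Require Import Defs.
From mathcomp Require Import all_boot all_order all_algebra all_fingroup.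
From mathcomp Require Import zify.
From Stdlib Require Import Ring_theory Ring FunctionalExtensionality.
Set Implicit Arguments. Unset Strict Implicit. Unset Printing Implicit Defensive.

Import GRing.Theory.

Open Scope ring_scope.

Section FpsAlg.
Variable R : comRingType.
Notation F := (nat -> R).
Implicit Types f g h : F.

Definition pt n f : {poly R} := \poly_(i < n.+1) f i.
Lemma ptE n f i : (i <= n)%N -> (pt n f)`_i = f i.
Proof. by move=> h; rewrite /pt coef_poly ltnS h. Qed.

Lemma fps_mulE (p q : {poly R}) f g n :
  (forall i, (i <= n)%N -> p`_i = f i) -> (forall i, (i <= n)%N -> q`_i = g i) ->
  fps_mul f g n = (p * q)`_n.
Proof.
move=> hp hq; rewrite coefM /fps_mul; apply: eq_bigr => i _.
by rewrite hp ?hq // ?leq_subr // -ltnS.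
Qed.

Lemma fps_mul_pt f g n i : (i <= n)%N -> fps_mul f g i = (pt n f * pt n g)`_i.
Proof.
move=> hi; apply: fps_mulE => j hj; rewrite ptE //; exact: leq_trans hj hi.
Qed.

Lemma fps_mulC f g : fps_mul f g = fps_mul g f.
Proof.
apply: functional_extensionality => n.
by rewrite (fps_mul_pt f g (leqnn n)) (fps_mul_pt g f (leqnn n)) mulrC.
Qed.

Lemma fps_mulA f g h : fps_mul f (fps_mul g h) = fps_mul (fps_mul f g) h.
Proof.
apply: functional_extensionality => n.
rewrite (@fps_mulE (pt n f) (pt n g * pt n h)); last first.
- by move=> i hi; rewrite (fps_mul_pt g h hi).
- by move=> i hi; rewrite ptE.
rewrite (@fps_mulE (pt n f * pt n g) (pt n h)) ?mulrA //.
- by move=> i hi; rewrite (fps_mul_pt f g hi).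
- by move=> i hi; rewrite ptE.
Qed.

Lemma fps_mulDl f g h : fps_mul (fps_add f g) h = fps_add (fps_mul f h) (fps_mul g h).
Proof.
apply: functional_extensionality => n.
by rewrite /fps_mul /fps_add -big_split /=; apply: eq_bigr => i _; rewrite mulrDl.
Qed.

Lemma fps_mul1 f : fps_mul (fps_const 1) f = f.
Proof.
apply: functional_extensionality => n.
rewrite /fps_mul big_ord_recl /= /fps_const /= mul1r subn0 big1 ?addr0 // => i _.
by rewrite /bump /= mul0r.
Qed.

Definition fps_opp f : F := fun n => - f n.
Definition fps_sub f g : F := fps_add f (fps_opp g).

Lemma fps_rt : ring_theory (@fps_const R 0) (@fps_const R 1) (@fps_add R) (@fps_mul R)
  fps_sub fps_opp (@eq F).
Proof.
split.
- move=> f; apply: functional_extensionality => n.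
  by rewrite /fps_add /fps_const; case: (n == 0%N); rewrite add0r.
- by move=> f g; apply: functional_extensionality => n; rewrite /fps_add addrC.
- by move=> f g h; apply: functional_extensionality => n; rewrite /fps_add addrA.
- exact: fps_mul1.
- exact: fps_mulC.
- exact: fps_mulA.
- exact: fps_mulDl.
- by [].
- move=> f; apply: functional_extensionality => n.
  by rewrite /fps_add /fps_opp /fps_const subrr; case: (n == 0%N).
Qed.

Add Ring fpsRing : fps_rt.

Lemma fps_constD (a b : R) : fps_const (a + b) = fps_add (fps_const a) (fps_const b).
Proof.
apply: functional_extensionality => n; rewrite /fps_add /fps_const.
by case: (n == 0%N); rewrite ?addr0.
Qed.

Lemma fps_constM (a b : R) : fps_const (a * b) = fps_mul (fps_const a) (fps_const b).
Proof.
apply: functional_extensionality => n; rewrite /fps_mul /fps_const.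
case: n => [|n]; first by rewrite big_ord1.
rewrite big1 // => i _; case: i => [[|i] hi]; by rewrite /= ?subn0 ?mulr0 ?mul0r.
Qed.

Definition X1 : F := fps_mono 1 1.

Lemma fps_mono1 (c : R) : fps_mono c 1 = fps_mul (fps_const c) X1.
Proof.
apply: functional_extensionality => n; rewrite /fps_mul /fps_const /X1 /fps_mono.
rewrite big_ord_recl /= subn0 big1 ?addr0; first by case: (n == 1%N); rewrite ?mulr1 ?mulr0.
by move=> i _; rewrite mul0r.
Qed.

Lemma fps_mono2 (c : R) : fps_mono c 2 = fps_mul (fps_const c) (fps_mul X1 X1).
Proof.
rewrite fps_mulA -fps_mono1.
apply: functional_extensionality => n; rewrite /fps_mul /X1 /fps_mono.
case: n => [|n]; first by rewrite big_ord1 /= mul0r.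
rewrite big_ord_recl /= mul0r add0r.
case: n => [|n]; first by rewrite big_ord1 /= mulr0.
rewrite big_ord_recl /= subn1 /= big1 ?addr0.
  by case: n => [|n] /=; rewrite ?mulr1 // mulr0.
move=> i _; rewrite /bump /=; case: (i.+2 == 1)%N => //=; by rewrite mul0r.
Qed.

Lemma fps_pow_low f : f 0%N = 0 -> forall k n, (n < k)%N -> fps_pow f k n = 0.
Proof.
move=> f0; elim=> [//|k IH] n hn.
rewrite /fps_pow iterS -/(fps_pow f k) /fps_mul big1 // => i _.
case: i => [[|i] hi] /=; first by rewrite f0 mul0r.
by rewrite IH ?mulr0 //; lia.
Qed.

Lemma fps_inv_widen f : f 0%N = 0 -> forall n N, (n < N)%N ->
  fps_inv_1m f n = \sum_(k < N) fps_pow f k n.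
Proof.
move=> f0 n N hN; rewrite /fps_inv_1m (big_ord_widen N (fun k => fps_pow f k n) hN).
rewrite big_mkcond /=; apply: eq_bigr => k _.
by case: ifP => // hk; rewrite fps_pow_low //; move/negbT: hk; rewrite -leqNgt.
Qed.

Lemma fps_inv_eq f : f 0%N = 0 ->
  fps_inv_1m f = fps_add (fps_const 1) (fps_mul f (fps_inv_1m f)).
Proof.
move=> f0; apply: functional_extensionality => n.
rewrite /fps_add; rewrite [fps_mul f _ n]/fps_mul.
have -> : \sum_(i < n.+1) f i * fps_inv_1m f (n - i)%N =
          \sum_(i < n.+1) \sum_(k < n.+1) f i * fps_pow f k (n - i)%N.
  apply: eq_bigr => i _; rewrite (fps_inv_widen f0 (N := n.+1)) ?big_distrr //.
  by rewrite ltnS leq_subr.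
rewrite exchange_big /=.
rewrite (fps_inv_widen f0 (N := n.+2)) // big_ord_recl /=.
congr (_ + _); apply: eq_bigr => k _; by rewrite add0n.
Qed.

Lemma fps_uniq g c (A B : F) : g 0%N = 0 ->
  A = fps_add c (fps_mul g A) -> B = fps_add c (fps_mul g B) -> A = B.
Proof.
move=> g0 hA hB; apply: functional_extensionality => n.
elim/ltn_ind: n => n IH.
rewrite hA hB /fps_add /fps_mul; congr (_ + _); apply: eq_bigr => i _.
case: i => [[|i] hi] /=; first by rewrite g0 !mul0r.
by rewrite IH //; lia.
Qed.

End FpsAlg.

Close Scope ring_scope.


Section NatComb.
Implicit Types (f g : nat -> nat) (n m k : nat).

Definition stN n f (d c : bool) : nat :=
  count (fun i => all (fun j => (if d then j < i else i < j) ==>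
                                (if c then f j < f i else f i < f j)) (iota 0 n))
        (iota 0 n).
Definition pcut n f k := all (fun a => all (fun b => f a < f b) (iota k (n - k))) (iota 0 k).
Definition mcut n f k := all (fun a => all (fun b => f b < f a) (iota k (n - k))) (iota 0 k).
Definition pdec n f := has (fun k => (0 < k) && pcut n f k) (iota 0 n).
Definition mdec n f := has (fun k => (0 < k) && mcut n f k) (iota 0 n).
Definition pat2413 n f : Prop := exists i j k l,
  [/\ i < j, j < k, k < l, l < n & [/\ f k < f i, f i < f l & f l < f j]].
Definition pat3142 n f : Prop := exists i j k l,
  [/\ i < j, j < k, k < l, l < n & [/\ f j < f l, f l < f i & f i < f k]].
Definition injN n f := forall i j, i < n -> j < n -> f i = f j -> i = j.

Lemma pcutP n f k : k <= n ->
  reflect (forall a b, a < k -> k <= b -> b < n -> f a < f b) (pcut n f k).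
Proof.
move=> hk; apply: (iffP allP) => H.
- move=> a b ha hb hbn; have := H a; rewrite mem_iota add0n => /(_ ha) /allP; apply.
  by rewrite mem_iota; lia.
- move=> a; rewrite mem_iota => ha; apply/allP => b; rewrite mem_iota => hb.
  apply: H; lia.
Qed.

Lemma mcutP n f k : k <= n ->
  reflect (forall a b, a < k -> k <= b -> b < n -> f b < f a) (mcut n f k).
Proof.
move=> hk; apply: (iffP allP) => H.
- move=> a b ha hb hbn; have := H a; rewrite mem_iota add0n => /(_ ha) /allP; apply.
  by rewrite mem_iota; lia.
- move=> a; rewrite mem_iota => ha; apply/allP => b; rewrite mem_iota => hb.
  apply: H; lia.
Qed.

Lemma pdecP n f : reflect (exists k, [/\ 0 < k, k < n & pcut n f k]) (pdec n f).
Proof.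
apply: (iffP hasP) => [[k] | [k [h1 h2 h3]]].
- by rewrite mem_iota add0n => hk /andP [h1 h2]; exists k.
- by exists k; rewrite ?mem_iota ?h1 ?h3.
Qed.

Lemma mdecP n f : reflect (exists k, [/\ 0 < k, k < n & mcut n f k]) (mdec n f).
Proof.
apply: (iffP hasP) => [[k] | [k [h1 h2 h3]]].
- by rewrite mem_iota add0n => hk /andP [h1 h2]; exists k.
- by exists k; rewrite ?mem_iota ?h1 ?h3.
Qed.

Lemma pcutN n f k : ~~ pcut n f k -> exists a b, [/\ a < k, k <= b, b < n & f b <= f a].
Proof.
rewrite /pcut -has_predC => /hasP [a]; rewrite mem_iota => ha /=.
rewrite -has_predC => /hasP [b]; rewrite mem_iota => hb /=; rewrite -leqNgt => hab.
exists a, b; split => //; lia.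
Qed.

Lemma mcutN n f k : ~~ mcut n f k -> exists a b, [/\ a < k, k <= b, b < n & f a <= f b].
Proof.
rewrite /mcut -has_predC => /hasP [a]; rewrite mem_iota => ha /=.
rewrite -has_predC => /hasP [b]; rewrite mem_iota => hb /=; rewrite -leqNgt => hab.
exists a, b; split => //; lia.
Qed.

Lemma pdec_mdec n f : pdec n f -> mdec n f -> False.
Proof.
move=> /pdecP [k [k0 kn /pcutP Hk]] /mdecP [j [j0 jn /mcutP Hj]].
have := Hk (ltnW kn) 0 n.-1; have := Hj (ltnW jn) 0 n.-1; lia.
Qed.

Lemma pat2413_tr n n' f g (e : nat -> nat) :
  (forall i j, i < j -> j < n' -> e i < e j) -> (forall i, i < n' -> e i < n) ->
  (forall i j, i < n' -> j < n' -> (g i < g j) = (f (e i) < f (e j))) ->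
  pat2413 n' g -> pat2413 n f.
Proof.
move=> he hr hg [i [j [k [l [h1 h2 h3 h4 [v1 v2 v3]]]]]].
exists (e i), (e j), (e k), (e l); split; try apply: he => //; try lia.
- exact: hr.
- by split; rewrite -hg //; lia.
Qed.

Lemma pat3142_tr n n' f g (e : nat -> nat) :
  (forall i j, i < j -> j < n' -> e i < e j) -> (forall i, i < n' -> e i < n) ->
  (forall i j, i < n' -> j < n' -> (g i < g j) = (f (e i) < f (e j))) ->
  pat3142 n' g -> pat3142 n f.
Proof.
move=> he hr hg [i [j [k [l [h1 h2 h3 h4 [v1 v2 v3]]]]]].
exists (e i), (e j), (e k), (e l); split; try apply: he => //; try lia.
- exact: hr.
- by split; rewrite -hg //; lia.
Qed.

Lemma argmax n f : exists q, q <= n /\ forall i, i <= n -> f i <= f q.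
Proof.
elim: n => [|n [q [hq H]]]; first by exists 0; split => // i; rewrite leqn0 => /eqP ->.
case: (leqP (f n.+1) (f q)) => h.
- exists q; split; first lia.
  move=> i; rewrite leq_eqVlt ltnS => /orP [/eqP -> //|]; exact: H.
- exists n.+1; split => // i; rewrite leq_eqVlt ltnS => /orP [/eqP -> //|hi].
  have := H i hi; lia.
Qed.


Lemma sep_dec_aux n : forall f, 0 < n -> injN n.+1 f -> ~ pat2413 n.+1 f -> ~ pat3142 n.+1 f ->
  pdec n.+1 f || mdec n.+1 f.
Proof.
elim: n => [//|n IH] f _; case: n IH f => [|n] IH f finj n24 n31.
  case: (ltngtP (f 0) (f 1)) => h.
  - apply/orP; left; apply/pdecP; exists 1; split => //; apply/pcutP => // a b ha hb hbn.
    have -> : a = 0 by lia. have -> : b = 1 by lia. done.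
  - apply/orP; right; apply/mdecP; exists 1; split => //; apply/mcutP => // a b ha hb hbn.
    have -> : a = 0 by lia. have -> : b = 1 by lia. done.
  - by have := finj 0 1 isT isT h.
case E: (pdec n.+3 f || mdec n.+3 f) => //; exfalso.
have npc : forall k, 0 < k -> k < n.+3 -> ~~ pcut n.+3 f k.
  move=> k h1 h2; apply/negP => hk; move/negP: E; apply; apply/orP; left.
  by apply/pdecP; exists k.
have nmc : forall k, 0 < k -> k < n.+3 -> ~~ mcut n.+3 f k.
  move=> k h1 h2; apply/negP => hk; move/negP: E; apply; apply/orP; right.
  by apply/mdecP; exists k.
have [q [hq qmax]] := argmax n.+2 f.
have qlt : forall i, i < n.+3 -> i != q -> f i < f q.
  move=> i hi hiq; have := qmax i; rewrite -ltnS => /(_ hi).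
  rewrite leq_eqVlt => /orP [/eqP h|//].
  have hq3 : q < n.+3 by lia.
  by have := finj i q hi hq3 h => /eqP; rewrite (negbTE hiq).
pose e i := if i < q then i else i.+1.
pose g i := f (e i).
have he : forall i j, i < j -> j < n.+2 -> e i < e j.
  by move=> i j hij hj; rewrite /e; case: ifP; case: ifP; lia.
have hr : forall i, i < n.+2 -> e i < n.+3.
  by move=> i hi; rewrite /e; case: ifP; lia.
have ginj : injN n.+2 g.
  move=> i j hi hj; rewrite /g => /finj h.
  have {h} := h (hr i hi) (hr j hj); rewrite /e; case: ifP; case: ifP; lia.
have n24g : ~ pat2413 n.+2 g.
  by move=> hp; apply: n24; apply: (pat2413_tr he hr _ hp).
have n31g : ~ pat3142 n.+2 g.
  by move=> hp; apply: n31; apply: (pat3142_tr he hr _ hp).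
have := IH g isT ginj n24g n31g.
case/orP => [/pdecP [k [k0 kn /pcutP gk]] | /mdecP [k [k0 kn /mcutP gk]]].
- have {}gk := gk (ltnW kn).
  case: (leqP k q) => hkq.
  + move/negP: (npc k k0 (ltn_trans kn (ltnSn _))); apply; apply/pcutP; first lia.
    move=> a b ha hb hbn.
    have ea : f a = g a by rewrite /g /e; case: ifP => // /negbT; lia.
    case: (ltngtP b q) => hbq.
    * have eb : f b = g b by rewrite /g /e hbq.
      by rewrite ea eb; apply: gk; lia.
    * have eb : f b = g b.-1 by rewrite /g /e; case: ifP => [?|_]; [exfalso; lia| congr f; lia].
      rewrite ea eb; apply: gk; lia.
    * rewrite hbq; apply: qlt; lia.
  +
    case: (posnP q) => q0.
    * move/negP: (nmc 1 isT isT); apply; apply/mcutP => // a b ha hb hbn.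
      have -> : a = 0 by lia. rewrite -q0; apply: qlt => //; lia.
    * have [a [b [ha hb hbn hfab]]] := pcutN (npc q q0 (leq_ltn_trans hq (ltnSn _))).
      have bq : b != q.
        apply/eqP => ebq; move: hfab; rewrite ebq; have := qlt a; lia.
      have fba : f b < f a.
        rewrite ltn_neqAle hfab andbT; apply/eqP => h.
        have := finj b a hbn (ltn_trans ha (leq_ltn_trans hq (ltnSn _))) h; lia.
      have bk : b <= k.
        rewrite leqNgt; apply/negP => hbk.
        have ea : f a = g a by rewrite /g /e ha.
        have eb : f b = g b.-1 by rewrite /g /e; case: ifP => [?|_]; [exfalso; lia| congr f; lia].
        have := gk a b.-1; rewrite -ea -eb; lia.
      apply: n24; exists a, q, b, k.+1; split; try lia.
      have ea : f a = g a by rewrite /g /e ha.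
      have ek : f k.+1 = g k by rewrite /g /e; case: ifP => [?|_]; [exfalso; lia| done].
      split => //.
      * rewrite ea ek; apply: gk; lia.
      * apply: qlt; lia.
- have {}gk := gk (ltnW kn).
  case: (leqP q k) => hkq.
  + move/negP: (nmc k.+1 isT (leq_ltn_trans kn (ltnSn _))); apply; apply/mcutP; first lia.
    move=> a b ha hb hbn.
    have eb : f b = g b.-1 by rewrite /g /e; case: ifP => [?|_]; [exfalso; lia| congr f; lia].
    case: (ltngtP a q) => haq.
    * have ea : f a = g a by rewrite /g /e haq.
      by rewrite ea eb; apply: gk; lia.
    * have ea : f a = g a.-1 by rewrite /g /e; case: ifP => [?|_]; [exfalso; lia| congr f; lia].
      rewrite ea eb; apply: gk; lia.
    * rewrite haq; apply: qlt; lia.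
  +
    case: (ltnP q n.+2) => hqn; last first.
      have qe : q = n.+2 by lia.
      move/negP: (npc n.+2 isT (ltnSn _)); apply; apply/pcutP => // a b ha hb hbn.
      have -> : b = q by lia.
      apply: qlt; lia.
    have [a [b [ha hb hbn hfab]]] := mcutN (nmc q.+1 isT (leq_ltn_trans hqn (ltnSn _))).
    have aq : a != q.
      apply/eqP => eaq; move: hfab; rewrite eaq; have := qlt b; lia.
    have fab : f a < f b.
      rewrite ltn_neqAle hfab andbT; apply/eqP => h.
      have := finj a b (ltn_trans ha (leq_ltn_trans hqn (ltnSn _))) hbn h; lia.
    have eb : f b = g b.-1 by rewrite /g /e; case: ifP => [?|_]; [exfalso; lia| congr f; lia].
    have ea : f a = g a by rewrite /g /e; case: ifP => // /negbT; lia.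
    have ak : k <= a.
      rewrite leqNgt; apply/negP => hak.
      have := gk a b.-1; rewrite -ea -eb; lia.
    apply: n31; exists 0, a, q, b; split; try lia.
    have e0 : f 0 = g 0 by rewrite /g /e; case: ifP => // /negbT; lia.
    split => //.
    * rewrite eb e0; apply: gk; lia.
    * apply: qlt; lia.
Qed.

Lemma sep_dec n f : 1 < n -> injN n f -> ~ pat2413 n f -> ~ pat3142 n f ->
  pdec n f || mdec n f.
Proof. by case: n => [//|n] h; apply: sep_dec_aux. Qed.


Definition eqon n f g := forall i, i < n -> f i = g i.

Lemma stN_ext n f g d c : eqon n f g -> stN n f d c = stN n g d c.
Proof.
move=> e; apply: eq_in_count => i; rewrite mem_iota => hi.
apply: eq_in_all => j; rewrite mem_iota => hj; rewrite !e //; lia.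
Qed.

Lemma pcut_ext n f g k : eqon n f g -> pcut n f k = pcut n g k.
Proof.
move=> e; apply: eq_in_all => a; rewrite mem_iota => ha.
apply: eq_in_all => b; rewrite mem_iota => hb.
case: (leqP k n) => hk; first by rewrite !e //; lia.
lia.
Qed.

Lemma mcut_ext n f g k : eqon n f g -> mcut n f k = mcut n g k.
Proof.
move=> e; apply: eq_in_all => a; rewrite mem_iota => ha.
apply: eq_in_all => b; rewrite mem_iota => hb.
case: (leqP k n) => hk; first by rewrite !e //; lia.
lia.
Qed.

Lemma pdec_ext n f g : eqon n f g -> pdec n f = pdec n g.
Proof. by move=> e; apply: eq_has => k; rewrite (pcut_ext k e). Qed.
Lemma mdec_ext n f g : eqon n f g -> mdec n f = mdec n g.
Proof. by move=> e; apply: eq_has => k; rewrite (mcut_ext k e). Qed.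

Lemma pat2413_ext n f g : eqon n f g -> pat2413 n f -> pat2413 n g.
Proof.
move=> e hp; apply: (pat2413_tr (e := id) _ _ _ hp) => //= i j hi hj.
by rewrite !e.
Qed.
Lemma pat3142_ext n f g : eqon n f g -> pat3142 n f -> pat3142 n g.
Proof.
move=> e hp; apply: (pat3142_tr (e := id) _ _ _ hp) => //= i j hi hj.
by rewrite !e.
Qed.

Lemma all_const (b : bool) (s : seq nat) : s != [::] -> all (fun _ => b) s = b.
Proof. by case: s => // x s _ /=; case: b => //=; rewrite all_predT. Qed.

Lemma count_andl (b : bool) (P : pred nat) s :
  count (fun i => b && P i) s = if b then count P s else 0.
Proof. by case: b => //; rewrite count_pred0. Qed.

Definition glue k f g := fun i => if i < k then f i else k + g (i - k).

Lemma stN_glue k m f g d c : 0 < k -> 0 < m -> (forall i, i < k -> f i < k) ->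
  stN (k + m) (glue k f g) d c =
  (if d || ~~ c then stN k f d c else 0) + (if ~~ d || c then stN m g d c else 0).
Proof.
move=> k0 m0 fk; rewrite /stN iotaD count_cat add0n.
congr (_ + _).
- rewrite -count_andl; apply: eq_in_count => i; rewrite mem_iota => hi /=.
  rewrite all_cat [RHS]andbC; congr andb.
    apply: eq_in_all => j; rewrite mem_iota => hj /=.
    have hjk : j < k by lia.
    have hik : i < k by lia.
    by rewrite /glue hjk hik.
  + rewrite -(all_const (d || ~~ c) (s := iota k m)); last by case: (m) m0.
    apply: eq_in_all => j; rewrite mem_iota => hj /=.
    have hjk : (j < k) = false by apply/negbTE; lia.
    have hik : i < k by lia.
    rewrite /glue hjk hik.
    have := fk i; case: d; case: c => /=; lia.
- have ei : iota (0 + k) m = map (addn k) (iota 0 m) by rewrite add0n -{1}(addn0 k) iotaDl.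
  rewrite ei count_map -count_andl.
  apply: eq_in_count => i; rewrite mem_iota => hi /=.
  rewrite all_cat; congr andb.
  + rewrite -(all_const (~~ d || c) (s := iota 0 k)); last by case: (k) k0.
    apply: eq_in_all => j; rewrite mem_iota => hj /=.
    have hik : (k + i < k) = false by apply/negbTE; lia.
    have hjk : j < k by lia.
    rewrite /glue hik hjk.
    have := fk j; case: d; case: c => /=; lia.
  + rewrite all_map.
    apply: eq_in_all => j; rewrite mem_iota => hj /=.
    have hik : (k + i < k) = false by apply/negbTE; lia.
    have hjk : (k + j < k) = false by apply/negbTE; lia.
    rewrite /glue hik hjk !(addnC k) !addnK ltn_add2r.
    by case: d; case: c; rewrite ?ltn_add2r.
Qed.


Lemma glue_lo k f g i : i < k -> glue k f g i = f i.
Proof. by rewrite /glue => ->. Qed.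
Lemma glue_hi k f g i : k <= i -> glue k f g i = k + g (i - k).
Proof. by rewrite /glue ltnNge => ->. Qed.

Lemma pcut_glue k m f g : (forall i, i < k -> f i < k) -> pcut (k + m) (glue k f g) k.
Proof.
move=> fk; apply/pcutP; first lia.
move=> a b ha hb hbn; rewrite glue_lo // glue_hi //; have := fk a ha; lia.
Qed.

Lemma pcut_glue_up k m f g j : (forall i, i < k -> f i < k) -> j <= m ->
  pcut m g j -> pcut (k + m) (glue k f g) (k + j).
Proof.
move=> fk hj /(pcutP g hj) H; apply/pcutP; first lia.
move=> a b ha hb hbn; rewrite (glue_hi _ _ (_ : k <= b)); last lia.
case: (ltnP a k) => hak.
- rewrite glue_lo //; have := fk a hak; lia.
- rewrite glue_hi // ltn_add2l; apply: H; lia.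
Qed.

Lemma pcut_glue_down k m f g j : k < j -> j < k + m ->
  pcut (k + m) (glue k f g) j -> pcut m g (j - k).
Proof.
move=> h1 h2 /(pcutP _ (ltnW h2)) H; apply/pcutP; first lia.
move=> a b ha hb hbn; have := H (k + a) (k + b).
rewrite !glue_hi; try lia.
rewrite !addKn !ltn_add2l => H2; apply: H2; lia.
Qed.

Definition islast n f k :=
  [&& 0 < k, k < n, pcut n f k & all (fun j => ~~ pcut n f j) (iota k.+1 (n - k.+1))].

Lemma islast_glue k m f g : 0 < k -> 0 < m -> (forall i, i < k -> f i < k) ->
  ~~ pdec m g -> islast (k + m) (glue k f g) k.
Proof.
move=> k0 m0 fk npg; apply/and4P; split => //; first lia; first exact: pcut_glue.
apply/allP => j; rewrite mem_iota => hj; apply/negP => hc.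
move/negP: npg; apply; apply/pdecP; exists (j - k); split; try lia.
apply: pcut_glue_down hc; lia.
Qed.

Lemma islast_pdec n f k : islast n f k -> pdec n f.
Proof. by case/and4P => h1 h2 h3 _; apply/pdecP; exists k. Qed.

Lemma islast_uniq n f k1 k2 : islast n f k1 -> islast n f k2 -> k1 = k2.
Proof.
wlog: k1 k2 / k1 <= k2.
  move=> H h1 h2; case: (leqP k1 k2) => h; first exact: H.
  by apply/esym; apply: H => //; lia.
move=> hle /and4P [_ _ _ /allP A] /and4P [_ h2 h3 _].
case: (ltngtP k1 k2) => // hlt; last lia.
have hk2 : k2 \in iota k1.+1 (n - k1.+1) by rewrite mem_iota; lia.
by have := A k2 hk2; rewrite h3.
Qed.

Lemma islast_ex n f : pdec n f -> exists k, islast n f k.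
Proof.
move=> /pdecP hex.
have exP : exists j, [&& 0 < j, j < n & pcut n f j].
  by case: hex => j [h1 h2 h3]; exists j; rewrite h1 h2 h3.
have ubP : forall j, [&& 0 < j, j < n & pcut n f j] -> j <= n.
  by move=> j /and3P [_ h _]; lia.
case: (ex_maxnP exP ubP) => k /and3P [h1 h2 h3] hmax.
exists k; apply/and4P; split => //.
apply/allP => j; rewrite mem_iota => hj; apply/negP => hc.
have := hmax j; rewrite hc; lia.
Qed.

Definition upper k h := fun i => h (k + i) - k.

Lemma glue_restr k m h : (forall i, k <= i -> i < k + m -> k <= h i) ->
  eqon (k + m) h (glue k h (upper k h)).
Proof.
move=> hh i hi; rewrite /glue /upper; case: ifP => // /negbT; rewrite -leqNgt => hk.
rewrite (subnKC hk); have := hh i hk hi; lia.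
Qed.

Lemma pat2413_glue k m f g : (forall i, i < k -> f i < k) ->
  ~ pat2413 k f -> ~ pat2413 m g -> ~ pat2413 (k + m) (glue k f g).
Proof.
move=> fk nf ng [i [j [l [o [h1 h2 h3 h4 [v1 v2 v3]]]]]].
case: (ltnP o k) => ho.
  apply: nf; exists i, j, l, o; split => //; rewrite -!(@glue_lo k f g) //; lia.
case: (leqP k i) => hi.
  apply: ng; exists (i - k), (j - k), (l - k), (o - k); split; try lia.
  move: v1 v2 v3; rewrite !glue_hi; try lia; move=> *; split; lia.
move: v1 v2 v3; rewrite (glue_lo _ _ hi) (glue_hi _ _ ho).
case: (ltnP l k) => hl.
  rewrite (glue_lo _ _ hl) (glue_lo _ _ (ltn_trans h2 hl)); have := fk j; lia.
rewrite (glue_hi _ _ hl); have := fk i; lia.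
Qed.

Lemma pat3142_glue k m f g : (forall i, i < k -> f i < k) ->
  ~ pat3142 k f -> ~ pat3142 m g -> ~ pat3142 (k + m) (glue k f g).
Proof.
move=> fk nf ng [i [j [l [o [h1 h2 h3 h4 [v1 v2 v3]]]]]].
case: (ltnP o k) => ho.
  apply: nf; exists i, j, l, o; split => //; rewrite -!(@glue_lo k f g) //; lia.
case: (leqP k i) => hi.
  apply: ng; exists (i - k), (j - k), (l - k), (o - k); split; try lia.
  move: v1 v2 v3; rewrite !glue_hi; try lia; move=> *; split; lia.
move: v1 v2 v3; rewrite (glue_lo _ _ hi) (glue_hi _ _ ho); have := fk i; lia.
Qed.

Lemma pat2413_restr_lo k m h : ~ pat2413 (k + m) h -> ~ pat2413 k h.
Proof.
move=> nh hp; apply: nh; apply: (pat2413_tr (e := id) _ _ _ hp) => //= i hi; lia.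
Qed.
Lemma pat3142_restr_lo k m h : ~ pat3142 (k + m) h -> ~ pat3142 k h.
Proof.
move=> nh hp; apply: nh; apply: (pat3142_tr (e := id) _ _ _ hp) => //= i hi; lia.
Qed.
Lemma pat2413_restr_hi k m h : (forall i, k <= i -> i < k + m -> k <= h i) ->
  ~ pat2413 (k + m) h -> ~ pat2413 m (upper k h).
Proof.
move=> hh nh hp; apply: nh; apply: (pat2413_tr (e := addn k) _ _ _ hp) => /=.
- by move=> i j; rewrite ltn_add2l.
- by move=> i; rewrite ltn_add2l.
- move=> i j hi hj; rewrite /upper; have := hh (k + i); have := hh (k + j); lia.
Qed.
Lemma pat3142_restr_hi k m h : (forall i, k <= i -> i < k + m -> k <= h i) ->
  ~ pat3142 (k + m) h -> ~ pat3142 m (upper k h).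
Proof.
move=> hh nh hp; apply: nh; apply: (pat3142_tr (e := addn k) _ _ _ hp) => /=.
- by move=> i j; rewrite ltn_add2l.
- by move=> i; rewrite ltn_add2l.
- move=> i j hi hj; rewrite /upper; have := hh (k + i); have := hh (k + j); lia.
Qed.

Lemma islast_restr k m h : (forall i, i < k -> h i < k) ->
  (forall i, k <= i -> i < k + m -> k <= h i) ->
  islast (k + m) h k -> ~~ pdec m (upper k h).
Proof.
move=> hl hh /and4P [_ _ _ /allP A]; apply/negP => /pdecP [j [j0 jm hc]].
have := A (k + j); rewrite mem_iota => /(_ _) /negP; apply; first lia.
rewrite (pcut_ext _ (glue_restr hh)); apply: pcut_glue_up => //; lia.
Qed.


Definition revf n f := fun i => f (n - i.+1).
Definition compf n f := fun i => n - (f i).+1.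

Lemma map_rev_iota n : map (fun i => n - i.+1) (iota 0 n) = rev (iota 0 n).
Proof.
apply: (@eq_from_nth _ 0); first by rewrite size_map size_rev.
move=> i; rewrite size_map size_iota => hi.
rewrite (nth_map 0) ?size_iota // nth_rev ?size_iota // !nth_iota //; lia.
Qed.

Lemma count_revi n (P : pred nat) :
  count P (iota 0 n) = count (fun i => P (n - i.+1)) (iota 0 n).
Proof.
by rewrite -[RHS](count_map (fun i => n - i.+1) P) map_rev_iota count_rev.
Qed.

Lemma all_revi n (P : pred nat) :
  all P (iota 0 n) = all (fun i => P (n - i.+1)) (iota 0 n).
Proof.
by rewrite -[RHS](all_map (fun i => n - i.+1) P) map_rev_iota all_rev.
Qed.

Lemma stN_rev n f d c : stN n (revf n f) d c = stN n f (~~ d) c.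
Proof.
rewrite /stN [RHS]count_revi; apply: eq_in_count => i; rewrite mem_iota => hi.
rewrite [RHS]all_revi; apply: eq_in_all => j; rewrite mem_iota => hj /=.
rewrite /revf; case: d => /=; congr (_ ==> _); apply/idP/idP; lia.
Qed.

Lemma revfK n f : eqon n (revf n (revf n f)) f.
Proof. by move=> i hi; rewrite /revf; congr f; lia. Qed.

Lemma pat2413_rev n f : pat2413 n (revf n f) -> pat3142 n f.
Proof.
move=> [i [j [k [l [h1 h2 h3 h4 [v1 v2 v3]]]]]].
exists (n - l.+1), (n - k.+1), (n - j.+1), (n - i.+1); split; try lia.
by split.
Qed.

Lemma pat3142_rev n f : pat3142 n (revf n f) -> pat2413 n f.
Proof.
move=> [i [j [k [l [h1 h2 h3 h4 [v1 v2 v3]]]]]].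
exists (n - l.+1), (n - k.+1), (n - j.+1), (n - i.+1); split; try lia.
by split.
Qed.

Lemma pdec_rev n f : pdec n (revf n f) -> mdec n f.
Proof.
move=> /pdecP [k [k0 kn /(pcutP _ (ltnW kn)) H]]; apply/mdecP; exists (n - k).
split; try lia; apply/mcutP; first lia.
move=> a b ha hb hbn; have := H (n - b.+1) (n - a.+1); rewrite /revf.
rewrite (_ : n - (n - b.+1).+1 = b); last lia.
rewrite (_ : n - (n - a.+1).+1 = a); last lia.
apply; lia.
Qed.

Lemma mdec_rev n f : mdec n (revf n f) -> pdec n f.
Proof.
move=> /mdecP [k [k0 kn /(mcutP _ (ltnW kn)) H]]; apply/pdecP; exists (n - k).
split; try lia; apply/pcutP; first lia.
move=> a b ha hb hbn; have := H (n - b.+1) (n - a.+1); rewrite /revf.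
rewrite (_ : n - (n - b.+1).+1 = b); last lia.
rewrite (_ : n - (n - a.+1).+1 = a); last lia.
apply; lia.
Qed.

Lemma stN_comp n f d c : (forall i, i < n -> f i < n) ->
  stN n (compf n f) d c = stN n f d (~~ c).
Proof.
move=> fb; apply: eq_in_count => i; rewrite mem_iota => hi.
apply: eq_in_all => j; rewrite mem_iota => hj /=.
have := fb i; have := fb j; rewrite /compf; case: c => /= h1 h2; congr (_ ==> _);
  apply/idP/idP; lia.
Qed.

Lemma pat2413_comp n f : (forall i, i < n -> f i < n) -> pat2413 n (compf n f) -> pat3142 n f.
Proof.
move=> fb [i [j [k [l [h1 h2 h3 h4 [v1 v2 v3]]]]]].
exists i, j, k, l; split => //; move: v1 v2 v3; rewrite /compf.
have := fb i; have := fb j; have := fb k; have := fb l; move=> *; split; lia.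
Qed.

Lemma pat3142_comp n f : (forall i, i < n -> f i < n) -> pat3142 n (compf n f) -> pat2413 n f.
Proof.
move=> fb [i [j [k [l [h1 h2 h3 h4 [v1 v2 v3]]]]]].
exists i, j, k, l; split => //; move: v1 v2 v3; rewrite /compf.
have := fb i; have := fb j; have := fb k; have := fb l; move=> *; split; lia.
Qed.

End NatComb.


Section PermLink.

Definition pv n (p : 'S_n) : nat -> nat :=
  fun i => if (insub i : option 'I_n) is Some j then val (p j) else 0.

Lemma pvE n (p : 'S_n) (j : 'I_n) : pv p j = p j.
Proof. by rewrite /pv valK. Qed.

Lemma pvE' n (p : 'S_n) i (hi : i < n) : pv p i = p (Ordinal hi).
Proof. by rewrite /pv insubT. Qed.

Lemma pv_lt n (p : 'S_n) i : i < n -> pv p i < n.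
Proof. by move=> hi; rewrite (pvE' p hi). Qed.

Lemma pv_inj n (p : 'S_n) : injN n (pv p).
Proof.
move=> i j hi hj; rewrite (pvE' p hi) (pvE' p hj) => /val_inj /perm_inj [].
done.
Qed.

Lemma card_ordP n (P : pred 'I_n) (Q : pred nat) :
  (forall i : 'I_n, P i = Q i) -> #|[set i | P i]| = count Q (iota 0 n).
Proof.
move=> e; rewrite cardsE cardE /enum_mem size_filter -enumT -val_enum_ord count_map.
by apply: eq_count => i /=; rewrite -e.
Qed.


Lemma forall_ordP n (A : pred 'I_n) (B : pred nat) :
  (forall j : 'I_n, A j = B j) -> [forall j, A j] = all B (iota 0 n).
Proof.
move=> e; apply/forallP/allP => H j.
- by rewrite mem_iota add0n => hj; have := H (Ordinal hj); rewrite e.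
- by rewrite e; apply: H; rewrite mem_iota /=.
Qed.

Section Stats.
Variables (n : nat) (p : 'S_n).
Lemma lmaxE : lmax p = stN n (pv p) true true.
Proof. apply: card_ordP => i; apply: forall_ordP => j /=; by rewrite !pvE. Qed.
Lemma rmaxE : rmax p = stN n (pv p) false true.
Proof. apply: card_ordP => i; apply: forall_ordP => j /=; by rewrite !pvE. Qed.
Lemma lminE : lmin p = stN n (pv p) true false.
Proof. apply: card_ordP => i; apply: forall_ordP => j /=; by rewrite !pvE. Qed.
Lemma rminE : rmin p = stN n (pv p) false false.
Proof. apply: card_ordP => i; apply: forall_ordP => j /=; by rewrite !pvE. Qed.

Lemma c2413P : reflect (pat2413 n (pv p)) (contains2413 p).
Proof.
apply: (iffP idP).
- case/existsP => i /existsP [j /existsP [k /existsP [l /andP [h1 /andP [h2 /andP [h3 /andP [h4 /andP [h5 h6]]]]]]]].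
  by exists i, j, k, l; rewrite !pvE.
- case=> i [j [k [l [h1 h2 h3 h4 [v1 v2 v3]]]]].
  have hl : l < n by []. have hk : k < n by lia. have hj : j < n by lia. have hi : i < n by lia.
  apply/existsP; exists (Ordinal hi); apply/existsP; exists (Ordinal hj).
  apply/existsP; exists (Ordinal hk); apply/existsP; exists (Ordinal hl).
  by move: v1 v2 v3; rewrite !(pvE' p) /= => -> -> ->; rewrite h1 h2 h3.
Qed.

Lemma c3142P : reflect (pat3142 n (pv p)) (contains3142 p).
Proof.
apply: (iffP idP).
- case/existsP => i /existsP [j /existsP [k /existsP [l /andP [h1 /andP [h2 /andP [h3 /andP [h4 /andP [h5 h6]]]]]]]].
  by exists i, j, k, l; rewrite !pvE.
- case=> i [j [k [l [h1 h2 h3 h4 [v1 v2 v3]]]]].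
  have hl : l < n by []. have hk : k < n by lia. have hj : j < n by lia. have hi : i < n by lia.
  apply/existsP; exists (Ordinal hi); apply/existsP; exists (Ordinal hj).
  apply/existsP; exists (Ordinal hk); apply/existsP; exists (Ordinal hl).
  by move: v1 v2 v3; rewrite !(pvE' p) /= => -> -> ->; rewrite h1 h2 h3.
Qed.

Lemma sepP : separable p <-> [/\ 0 < n, ~ pat2413 n (pv p) & ~ pat3142 n (pv p)].
Proof.
rewrite /separable; split.
- by case/and3P => h1 /c2413P h2 /c3142P h3.
- by case=> h1 h2 h3; rewrite h1 /=; apply/andP; split; apply/negP; [move/c2413P|move/c3142P].
Qed.

Lemma splitX_pdec :
  [exists k : 'I_n, (0 < k) && [forall a : 'I_n, forall b : 'I_n,
           ((a < k) && (k <= b)) ==> (p a < p b)]] = pdec n (pv p).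
Proof.
apply/idP/idP.
- case/existsP => k /andP [k0 /forallP H]; apply/pdecP; exists k; split => //.
  apply/pcutP; first exact: ltnW.
  move=> a b ha hb hbn; have ha' : a < n by lia.
  have := H (Ordinal ha') => /forallP /(_ (Ordinal hbn)) /=.
  by rewrite ha hb /= !(pvE' p).
- case/pdecP => k [k0 kn /(pcutP _ (ltnW kn)) H]; apply/existsP; exists (Ordinal kn).
  rewrite k0 /=; apply/forallP => a; apply/forallP => b; apply/implyP => /andP [ha hb].
  by have := H a b ha hb (ltn_ord b); rewrite !pvE.
Qed.

Lemma reducibleE : reducible p = pdec n (pv p).
Proof.
rewrite /reducible /irreducible splitX_pdec.
case: (ltnP 1 n) => hn.
- by rewrite /= (_ : (n == 1) = false) ?negbK //; apply/negbTE; lia.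
- apply/esym/negbTE; apply/negP => /pdecP [k [k0 kn _]]; lia.
Qed.

Lemma irreducibleE : irreducible p = (n == 1) || ((1 < n) && ~~ pdec n (pv p)).
Proof. by rewrite /irreducible splitX_pdec. Qed.

End Stats.


Definition rvp n : 'S_n := perm (@rev_ord_inj n).

Lemma pv_rev n (p : 'S_n) : eqon n (pv (rvp n * p)%g) (revf n (pv p)).
Proof.
move=> i hi; rewrite (pvE' _ hi) permM permE /revf.
have h : n - i.+1 < n by lia.
by rewrite (pvE' _ h); do 2 f_equal; apply: val_inj.
Qed.

Lemma pv_comp n (p : 'S_n) : eqon n (pv (p * rvp n)%g) (compf n (pv p)).
Proof. by move=> i hi; rewrite (pvE' _ hi) permM permE /compf /= (pvE' _ hi). Qed.

Lemma rvpK n : (rvp n * rvp n = 1)%g.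
Proof. by apply/permP => i; rewrite permM !permE rev_ordK. Qed.

Lemma sep_rev1 n (p : 'S_n) : separable p -> separable (rvp n * p)%g.
Proof.
move/sepP => [h0 h1 h2]; apply/sepP; split => // hp.
- by apply: h2; apply: pat2413_rev; apply: pat2413_ext (pv_rev p) hp.
- by apply: h1; apply: pat3142_rev; apply: pat3142_ext (pv_rev p) hp.
Qed.

Lemma sep_rev n (p : 'S_n) : separable (rvp n * p)%g = separable p.
Proof.
apply/idP/idP; last exact: sep_rev1.
by move/sep_rev1; rewrite mulgA rvpK mul1g.
Qed.

Lemma sep_comp1 n (p : 'S_n) : separable p -> separable (p * rvp n)%g.
Proof.
move/sepP => [h0 h1 h2]; apply/sepP; split => // hp.
- apply: h2; apply: (pat2413_comp (fun i => @pv_lt n p i)).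
  exact: pat2413_ext (pv_comp p) hp.
- apply: h1; apply: (pat3142_comp (fun i => @pv_lt n p i)).
  exact: pat3142_ext (pv_comp p) hp.
Qed.

Lemma sep_comp n (p : 'S_n) : separable (p * rvp n)%g = separable p.
Proof.
apply/idP/idP; last exact: sep_comp1.
by move/sep_comp1; rewrite -mulgA rvpK mulg1.
Qed.

Lemma pdec_rvp n (p : 'S_n) : pdec n (pv (rvp n * p)%g) = mdec n (pv p).
Proof.
rewrite (pdec_ext (pv_rev p)); apply/idP/idP; first exact: pdec_rev.
move=> h; apply: mdec_rev; rewrite (mdec_ext (revfK (pv p))) //.
Qed.

End PermLink.

Import GRing.Theory.


Section GF.
Variable R : comRingType.

Lemma R_rt : @ring_theory (GRing.PzSemiRing.sort R) 0%R 1%R (@GRing.add R) (@GRing.mul R) (fun x y => (x - y)%R) (@GRing.opp R) (@eq R).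
Proof.
split => //=.
- exact: add0r. - exact: addrC. - exact: addrA. - exact: mul1r. - exact: mulrC.
- exact: mulrA. - exact: mulrDl. - exact: subrr.
Qed.
Add Ring Rring : R_rt.

Local Open Scope ring_scope.

Definition Mgf (a b c d : R) : nat -> R :=
  fun n => \sum_(p : 'S_n | separable p && mdec n (pv p)) weight p a b c d.

Lemma weightE n (p : 'S_n) (a b c d : R) : weight p a b c d =
  a ^+ stN n (pv p) true true * b ^+ stN n (pv p) false true *
  c ^+ stN n (pv p) true false * d ^+ stN n (pv p) false false.
Proof. by rewrite /weight lmaxE rmaxE lminE rminE. Qed.

Lemma weight_rev n (p : 'S_n) (a b c d : R) :
  weight (rvp n * p)%g a b c d = weight p b a d c.
Proof. rewrite !weightE !(stN_ext _ _ (pv_rev p)) !stN_rev /=; ring. Qed.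

Lemma weight_comp n (p : 'S_n) (a b c d : R) :
  weight (p * rvp n)%g a b c d = weight p c d a b.
Proof.
rewrite !weightE !(stN_ext _ _ (pv_comp p)) !(stN_comp _ _ (fun i => @pv_lt n p i)) /=; ring.
Qed.

Lemma Sgf_rev (a b c d : R) : Sgf a b c d = Sgf b a d c.
Proof.
apply: functional_extensionality => n.
rewrite /Sgf (reindex_inj (mulgI (rvp n))) /=.
by apply: eq_big => p; rewrite ?sep_rev // => _; rewrite weight_rev.
Qed.

Lemma Sgf_comp (a b c d : R) : Sgf a b c d = Sgf c d a b.
Proof.
apply: functional_extensionality => n.
rewrite /Sgf (reindex_inj (mulIg (rvp n))) /=.
by apply: eq_big => p; rewrite ?sep_comp // => _; rewrite weight_comp.
Qed.

Lemma Rgf_rev (a b c d : R) : Rgf a b c d = Mgf b a d c.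
Proof.
apply: functional_extensionality => n.
rewrite /Rgf /Mgf (reindex_inj (mulgI (rvp n))) /=.
apply: eq_big => p; first by rewrite sep_rev reducibleE pdec_rvp.
by move=> _; rewrite weight_rev.
Qed.


Lemma stN1 f d c : stN 1 f d c = 1%N.
Proof. by rewrite /stN /=; case: d; case: c. Qed.

Lemma weight1 (p : 'S_1) (a b c d : R) : weight p a b c d = a * b * c * d.
Proof. by rewrite weightE !stN1 !expr1. Qed.

Lemma sep1 (p : 'S_1) : separable p.
Proof. by apply/sepP; split => //; move=> [i [j [k [l [h1 h2 h3 h4 _]]]]]; lia. Qed.

Lemma sum_S1 (P : pred 'S_1) (F : 'S_1 -> R) c :
  (forall p, P p) -> (forall p, F p = c) -> \sum_(p | P p) F p = c.
Proof.
move=> hP hF; rewrite (eq_bigl predT) // (eq_bigr (fun _ => c)) // sumr_const.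
by rewrite card_Sn.
Qed.

Lemma sep_mdec n (p : 'S_n) : (1 < n)%N -> separable p -> ~~ pdec n (pv p) = mdec n (pv p).
Proof.
move=> hn /sepP [h0 h1 h2].
have := sep_dec hn (@pv_inj n p) h1 h2.
case hp: (pdec n (pv p)) => /= hm //.
by apply/esym/negbTE/negP => hm'; apply: (pdec_mdec hp hm').
Qed.

Lemma Sgf_dec (a b c d : R) : Sgf a b c d =
  fps_add (fps_mono (a * b * c * d) 1) (fps_add (Rgf a b c d) (Mgf a b c d)).
Proof.
apply: functional_extensionality => n; rewrite /fps_add /fps_mono.
case: n => [|[|n]].
- by rewrite /Sgf /Rgf /Mgf !big_pred0 // !addr0.
- rewrite /Sgf /Rgf /Mgf /= (sum_S1 (c := a * b * c * d)); first last.
  + by move=> p; rewrite weight1.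
  + exact: sep1.
  by rewrite !big_pred0 ?addr0 // => p; rewrite ?reducibleE /= andbF.
- rewrite add0r /Sgf (bigID (fun p => pdec n.+2 (pv p))) /=; congr (_ + _).
  + by apply: eq_bigl => p; rewrite reducibleE.
  + apply: eq_bigl => p; case hs: (separable p) => //=; exact: sep_mdec.
Qed.

Lemma Igf_dec (a b c d : R) : Igf a b c d =
  fps_add (fps_mono (a * b * c * d) 1) (Mgf a b c d).
Proof.
apply: functional_extensionality => n; rewrite /fps_add /fps_mono.
case: n => [|[|n]].
- by rewrite /Igf /Mgf !big_pred0 // !addr0.
- rewrite /Igf /Mgf /= (sum_S1 (c := a * b * c * d)); first last.
  + by move=> p; rewrite weight1.
  + by move=> p; rewrite sep1 irreducibleE.
  by rewrite !big_pred0 ?addr0 // => p; rewrite andbF.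
- rewrite add0r /Igf /Mgf; apply: eq_bigl => p; rewrite irreducibleE /=.
  case hs: (separable p) => //=; exact: sep_mdec.
Qed.

Lemma Sgf_IR (a b c d : R) : Sgf a b c d = fps_add (Igf a b c d) (Rgf a b c d).
Proof.
apply: functional_extensionality => n; rewrite /fps_add /Sgf /Igf /Rgf.
rewrite (bigID (fun p => irreducible p)) /=; congr (_ + _).
apply: eq_bigl => p; case hs: (separable p) => //=.
rewrite /reducible; case: n p hs => [|[|n]] p hs //.
Qed.

End GF.


Section Psum.

Lemma perm_pv n (p q : 'S_n) : eqon n (pv p) (pv q) -> p = q.
Proof. by move=> e; apply/permP => i; apply: ord_inj; rewrite -!pvE; apply: e. Qed.

Lemma islast_ext n f g k : eqon n f g -> islast n f k = islast n g k.
Proof.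
move=> e; rewrite /islast (pcut_ext k e); congr [&& _, _, _ & _].
by apply: eq_all => j; rewrite (pcut_ext j e).
Qed.

Lemma count_lt_iota t n : count (fun z => z < t) (iota 0 n) = minn t n.
Proof.
elim: n => [|n IH]; first by rewrite minn0.
by rewrite -addn1 iotaD count_cat IH /=; case: (ltnP n t) => h; lia.
Qed.

Lemma cut_lo n (p : 'S_n) k : k <= n -> pcut n (pv p) k ->
  forall i, i < k -> pv p i < k.
Proof.
move=> kn /(pcutP _ kn) H i hi.
have hin : i < n by lia.
set y := pv p i.
have yn : y < n by apply: pv_lt.
pose S := [set z : 'I_n | z <= y].
have cS : #|S| = y.+1.
  by rewrite (@card_ordP n _ (fun z => z < y.+1)) // count_lt_iota; lia.
have sub : p @^-1: S \subset [set z : 'I_n | z < k].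
  apply/subsetP => z; rewrite !inE => hz; rewrite ltnNge; apply/negP => hkz.
  have := H i z hi hkz (ltn_ord z); rewrite pvE -/y; lia.
have := subset_leq_card sub; rewrite card_preimset; last exact: perm_inj.
rewrite cS (@card_ordP n _ (fun z => z < k)) // count_lt_iota; lia.
Qed.

Lemma cut_hi n (p : 'S_n) k : k <= n -> pcut n (pv p) k ->
  forall i, k <= i -> i < n -> k <= pv p i.
Proof.
move=> kn /(pcutP _ kn) H i hi hin.
set y := pv p i.
have yn : y < n by apply: pv_lt.
pose S := [set z : 'I_n | y <= z].
have cnt : forall t, count (fun z => t <= z) (iota 0 n) = n - minn t n.
  move=> t; have h := count_predC (fun z => z < t) (iota 0 n).
  rewrite count_lt_iota size_iota in h.
  suff -> : count (fun z => t <= z) (iota 0 n) = count (predC (fun z => z < t)) (iota 0 n) by lia.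
  by apply: eq_count => z /=; rewrite leqNgt.
have cS : #|S| = n - y.
  by rewrite (@card_ordP n _ (fun z => y <= z)) // cnt; lia.
have sub : p @^-1: S \subset [set z : 'I_n | k <= z].
  apply/subsetP => z; rewrite !inE => hz; rewrite leqNgt; apply/negP => hkz.
  have := H z i hkz hi hin; rewrite pvE -/y; lia.
have := subset_leq_card sub; rewrite card_preimset; last exact: perm_inj.
rewrite cS (@card_ordP n _ (fun z => k <= z)) // cnt; lia.
Qed.

Variables (k m : nat).

Definition psum_fun (a : 'S_k) (b : 'S_m) (i : 'I_(k + m)) : 'I_(k + m) :=
  match split i with inl j => lshift m (a j) | inr j => rshift k (b j) end.

Lemma psum_fun_val (a : 'S_k) (b : 'S_m) (i : 'I_(k + m)) :
  val (psum_fun a b i) = glue k (pv a) (pv b) i.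
Proof.
rewrite /psum_fun /glue; case: splitP => j hj /=; rewrite hj.
- by rewrite pvE.
- by rewrite ?ltnNge ?leq_addr /= ?addKn pvE.
Qed.

Lemma psum_inj (a : 'S_k) (b : 'S_m) : injective (psum_fun a b).
Proof.
move=> i1 i2 /(congr1 val); rewrite !psum_fun_val /glue => h.
apply: val_inj; move: h.
case: (ltnP i1 k) => h1; case: (ltnP i2 k) => h2.
- by rewrite !(pvE' _ h1) !(pvE' _ h2) => /val_inj /perm_inj [].
- by have := pv_lt a h1; lia.
- by have := pv_lt a h2; lia.
- move/eqP; rewrite eqn_add2l => /eqP.
  have i1m : i1 - k < m by have := ltn_ord i1; lia.
  have i2m : i2 - k < m by have := ltn_ord i2; lia.
  rewrite (pvE' _ i1m) (pvE' _ i2m) => /val_inj /perm_inj [] /=; lia.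
Qed.

Definition psum (a : 'S_k) (b : 'S_m) : 'S_(k + m) := perm (@psum_inj a b).

Lemma pv_psum (a : 'S_k) (b : 'S_m) : eqon (k + m) (pv (psum a b)) (glue k (pv a) (pv b)).
Proof. by move=> i hi; rewrite (pvE' _ hi) permE psum_fun_val. Qed.

Lemma psum_pair_inj : injective (fun ab : 'S_k * 'S_m => psum ab.1 ab.2).
Proof.
move=> [a1 b1] [a2 b2] /= e.
have e1 := pv_psum a1 b1; have e2 := pv_psum a2 b2; rewrite e in e1.
have ea : a1 = a2.
  apply: perm_pv => i hi; have hik : i < k + m by lia.
  by have := e1 i hik; rewrite e2 // !glue_lo // => ->.
have eb : b1 = b2.
  apply: perm_pv => i hi; have hik : k + i < k + m by lia.
  have := e1 _ hik; rewrite e2 // !glue_hi ?leq_addr // !addKn => /eqP.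
  by rewrite eqn_add2l => /eqP ->.
by rewrite ea eb.
Qed.

Lemma psum_surj (p : 'S_(k + m)) : pcut (k + m) (pv p) k ->
  exists a b, [/\ p = psum a b, eqon k (pv a) (pv p) & eqon m (pv b) (upper k (pv p))].
Proof.
move=> hc.
have hlo := cut_lo (leq_addr m k) hc.
have hhi := cut_hi (leq_addr m k) hc.
pose fa (j : 'I_k) : 'I_k := Ordinal (hlo j (ltn_ord j)).
have fa_inj : injective fa.
  move=> j1 j2 /(congr1 val) /= h; apply: val_inj.
  have := ltn_ord j1; have := ltn_ord j2; move=> *.
  by apply: (pv_inj (p := p)) h; lia.
have hb : forall j : 'I_m, upper k (pv p) j < m.
  move=> j; rewrite /upper; have hj : k + j < k + m by have := ltn_ord j; lia.
  have := pv_lt p hj; lia.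
pose fb (j : 'I_m) : 'I_m := Ordinal (hb j).
have fb_inj : injective fb.
  move=> j1 j2 /(congr1 val) /=; rewrite /upper => h; apply: ord_inj.
  have h1 := hhi (k + j1) (leq_addr _ _); have h2 := hhi (k + j2) (leq_addr _ _).
  have hj1 : k + j1 < k + m by have := ltn_ord j1; lia.
  have hj2 : k + j2 < k + m by have := ltn_ord j2; lia.
  have : pv p (k + j1) = pv p (k + j2).
    have := h1 hj1; have := h2 hj2; lia.
  move/(pv_inj (p := p)) => /(_ hj1 hj2); lia.
exists (perm fa_inj), (perm fb_inj).
have ea : eqon k (pv (perm fa_inj)) (pv p) by move=> i hi; rewrite (pvE' _ hi) permE.
have eb : eqon m (pv (perm fb_inj)) (upper k (pv p)) by move=> i hi; rewrite (pvE' _ hi) permE.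
split => //; apply: perm_pv => i hi.
rewrite pv_psum // (glue_restr hhi hi) /glue; case: ifP => h; first by rewrite ea.
by rewrite eb //; lia.
Qed.

End Psum.

Import GRing.Theory.


Section D1.
Variable R : comRingType.
Add Ring Rring2 : (R_rt R).
Local Open Scope ring_scope.

Lemma weight_psum k m (al : 'S_k) (be : 'S_m) (a b c d : R) : (0 < k)%N -> (0 < m)%N ->
  weight (psum al be) a b c d = weight al a 1 c d * weight be a b 1 d.
Proof.
move=> k0 m0; rewrite !weightE !(stN_ext _ _ (pv_psum al be)).
have fk : forall i, (i < k)%N -> (pv al i < k)%N by move=> i hi; apply: pv_lt.
rewrite !stN_glue //=.
rewrite !exprD !expr1n !expr0; ring.
Qed.

Lemma Iplus_sum m (a b d : R) : (0 < m)%N ->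
  fps_mono (a * b * d) 1 m + Mgf a b 1 d m =
  \sum_(be : 'S_m | separable be && ~~ pdec m (pv be)) weight be a b 1 d.
Proof.
case: m => [//|[|m]] _.
- rewrite /Mgf big_pred0; last by move=> p; rewrite /= andbF.
  rewrite addr0 (sum_S1 (c := a * b * 1 * d)); first last.
  + by move=> p; rewrite weight1.
  + by move=> p; rewrite sep1.
  by rewrite /fps_mono /= mulr1.
- rewrite /fps_mono /= add0r /Mgf; apply: eq_bigl => p.
  by case hs: (separable p) => //=; rewrite sep_mdec.
Qed.

Lemma image_psum k m (p : 'S_(k + m)) : (0 < k)%N -> (0 < m)%N ->
  (p \in [set psum ab.1 ab.2 | ab in
      [set ab : 'S_k * 'S_m | separable ab.1 && (separable ab.2 && ~~ pdec m (pv ab.2))]])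
  = separable p && islast (k + m) (pv p) k.
Proof.
move=> k0 m0; apply/idP/idP.
- case/imsetP => [[al be]]; rewrite inE /= => /and3P [sa sb nb] ->.
  have e := pv_psum al be.
  have fk : forall i, (i < k)%N -> (pv al i < k)%N by move=> i hi; apply: pv_lt.
  move/sepP: sa => [_ a1 a2]; move/sepP: sb => [_ b1 b2].
  apply/andP; split.
  + apply/sepP; split; first lia.
    * by move=> hp; apply: (pat2413_glue fk a1 b1); apply: pat2413_ext e hp.
    * by move=> hp; apply: (pat3142_glue fk a2 b2); apply: pat3142_ext e hp.
  + by rewrite (islast_ext _ e); apply: islast_glue.
- case/andP => /sepP [_ h1 h2] hl.
  have hc : pcut (k + m) (pv p) k by case/and4P: hl.
  have [al [be [ep ea eb]]] := psum_surj hc.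
  apply/imsetP; exists (al, be) => //; rewrite inE /=.
  have hlo := cut_lo (leq_addr m k) hc.
  have hhi := cut_hi (leq_addr m k) hc.
  apply/and3P; split.
  + apply/sepP; split => // hp.
    * by apply: (pat2413_restr_lo h1); apply: pat2413_ext ea hp.
    * by apply: (pat3142_restr_lo h2); apply: pat3142_ext ea hp.
  + apply/sepP; split => // hp.
    * by apply: (pat2413_restr_hi hhi h1); apply: pat2413_ext eb hp.
    * by apply: (pat3142_restr_hi hhi h2); apply: pat3142_ext eb hp.
  + by rewrite (pdec_ext eb); apply: islast_restr.
Qed.

Lemma psum_sum k m (a b c d : R) : (0 < k)%N -> (0 < m)%N ->
  \sum_(p : 'S_(k + m) | separable p && islast (k + m) (pv p) k) weight p a b c d =
  Sgf a 1 c d k * (fps_mono (a * b * d) 1 m + Mgf a b 1 d m).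
Proof.
move=> k0 m0; rewrite Iplus_sum // /Sgf big_distrl /=.
under eq_bigr do rewrite big_distrr /=.
rewrite pair_big /=.
rewrite (eq_bigl (fun p => p \in [set psum ab.1 ab.2 | ab in
      [set ab : 'S_k * 'S_m | separable ab.1 && (separable ab.2 && ~~ pdec m (pv ab.2))]]));
  last by move=> p; rewrite image_psum.
rewrite big_imset /=; last by move=> x y _ _; apply: psum_pair_inj.
apply: eq_big => ab; first by rewrite inE.
by move=> _; rewrite weight_psum.
Qed.

Lemma partition_last n (a b c d : R) :
  Rgf a b c d n = \sum_(k < n.+1)
     \sum_(p : 'S_n | separable p && islast n (pv p) k) weight p a b c d.
Proof.
rewrite /Rgf (eq_bigr (fun k : 'I_n.+1 => \sum_(p : 'S_n)
    (if separable p && islast n (pv p) k then weight p a b c d else 0)));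
  last by move=> k _; rewrite big_mkcond.
rewrite exchange_big /= big_mkcond /=; apply: eq_bigr => p _.
case hs: (separable p) => /=; last by rewrite big1.
rewrite reducibleE; case hpd: (pdec n (pv p)).
- have [k0 hk0] := islast_ex hpd.
  have hk0n : (k0 < n.+1)%N by case/and4P: hk0 => _ h _ _; lia.
  rewrite (bigD1 (Ordinal hk0n)) //= hk0 big1 ?addr0 // => j hj.
  case hjl: (islast n (pv p) j) => //.
  have e := islast_uniq hjl hk0.
  by move: hj; rewrite (_ : j = Ordinal hk0n) ?eqxx //; apply: val_inj.
- rewrite big1 // => j _; case hjl: (islast n (pv p) j) => //.
  by rewrite (islast_pdec hjl) in hpd.
Qed.

Lemma Rgf_D1 (a b c d : R) :
  Rgf a b c d = fps_mul (Sgf a 1 c d) (fps_add (fps_mono (a * b * d) 1) (Mgf a b 1 d)).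
Proof.
apply: functional_extensionality => n.
rewrite partition_last /fps_mul /fps_add; apply: eq_bigr => [[k hk]] _ /=.
case: (posnP k) => [->|k0].
  rewrite big_pred0; last by move=> p; rewrite /islast /= andbF.
  by rewrite /Sgf big_pred0 ?mul0r.
case: (ltnP k n) => hkn; last first.
  have -> : (n - k)%N = 0%N by lia.
  rewrite big_pred0; last by move=> p; rewrite /islast (ltnNge k n) hkn /= !andbF.
  by rewrite /fps_mono /Mgf /= big_pred0 // addr0 mulr0.
have e := subnKC (ltnW hkn).
move: (n - k)%N e => m e; subst n.
apply: psum_sum => //; lia.
Qed.

End D1.

Import GRing.Theory.


Section Final.
Variable R : comRingType.
Add Ring fpsRing2 : (fps_rt R).
Local Open Scope ring_scope.
Notation F := (nat -> R).
Notation "x ** y" := (fps_mul x y) (at level 40, left associativity).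
Notation "x +++ y" := (fps_add x y) (at level 50, left associativity).
Notation C := (@fps_const R).
Notation X := (@X1 R).

Lemma Sgf0 (a b c d : R) : Sgf a b c d 0%N = 0.
Proof. by rewrite /Sgf big_pred0. Qed.
Lemma Mgf0 (a b c d : R) : Mgf a b c d 0%N = 0.
Proof. by rewrite /Mgf big_pred0. Qed.
Lemma mul0 (f g : F) : (f ** g) 0%N = f 0%N * g 0%N.
Proof. by rewrite /fps_mul big_ord1. Qed.
Lemma add0 (f g : F) : (f +++ g) 0%N = f 0%N + g 0%N.
Proof. by []. Qed.

Lemma D2 (a b c d : R) : Mgf a b c d = Sgf 1 b c d ** (fps_mono (b * a * c) 1 +++ Rgf a b c 1).
Proof.
by rewrite -Rgf_rev Rgf_D1 -Rgf_rev Sgf_rev.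
Qed.

Lemma inv_sol (g c : F) : g 0%N = 0 -> forall A, A = c +++ g ** A -> A = c ** fps_inv_1m g.
Proof.
move=> g0 A hA; apply: (fps_uniq g0 hA).
rewrite {1}(fps_inv_eq g0); ring.
Qed.


Lemma fps_subrr (f : F) : fps_sub f f = C 0.
Proof.
apply: functional_extensionality => n.
by rewrite /fps_sub /fps_add /fps_opp /fps_const subrr; case: (n == 0%N).
Qed.

Ltac norm := rewrite ?fps_mono2 ?fps_mono1 ?expr2 ?fps_constM.

Lemma E_id (a b c : R) : Egf a b c = fps_mono (a * b * c) 1 +++ Rgf a b c 1.
Proof.
pose sa := Sgf 1 a 1 1; pose sb := Sgf 1 b 1 1; pose sc := Sgf 1 c 1 1.
have sa0 : sa 0%N = 0 by apply: Sgf0.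
have sc0 : sc 0%N = 0 by apply: Sgf0.
have eM : Mgf a b 1 1 = sb ** (fps_mono (b * a * 1) 1 +++
             sa ** (fps_mono (a * b * 1) 1 +++ Mgf a b 1 1)).
  by rewrite {1}D2 Rgf_D1 [Sgf a 1 1 1]Sgf_rev.
have hA : fps_mono (a * b * 1) 1 +++ Mgf a b 1 1 =
          (fps_mono (a * b * 1) 1 ** (C 1 +++ sb)) ** fps_inv_1m (sa ** sb).
  apply: inv_sol; first by rewrite mul0 sa0 mul0r.
  rewrite {1}eM; norm; ring.
pose K := fps_mono (a * 1 * 1) 1 +++ Mgf a 1 1 1.
have K0 : K 0%N = 0 by rewrite /K add0 Mgf0 /fps_mono /= addr0.
have hK : sa = K +++ sa ** K.
  rewrite /sa -Sgf_rev {1}Sgf_dec Rgf_D1 /K; norm; ring.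
pose L := fps_mono (1 * a * c) 1 +++ Rgf a 1 c 1.
have eQ : Sgf a 1 c 1 = L +++ sc ** L.
  rewrite {1}Sgf_dec D2 /L /sc Sgf_comp Sgf_rev; norm; ring.
have eL : L = (C a ** C c ** X) +++ ((C 1 +++ sc) ** K) ** L.
  rewrite {1}/L Rgf_D1 -/K eQ; norm; ring.
pose I13 := fps_inv_1m (sa ** sc).
pose Y := ((C a ** C c ** X) ** (C 1 +++ sa)) ** I13.
have hI : I13 = C 1 +++ (sa ** sc) ** I13 by apply: fps_inv_eq; rewrite mul0 sa0 mul0r.
have eY : Y = (C a ** C c ** X) +++ ((C 1 +++ sc) ** K) ** Y.
  have key : forall e1 e2 : F, e1 = fps_sub (K +++ sa ** K) sa ->
      e2 = fps_sub (C 1 +++ (sa ** sc) ** I13) I13 ->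
      (C a ** C c ** X) +++ ((C 1 +++ sc) ** K) ** Y =
      Y +++ ((C a ** C c ** X) ** (C 1 +++ sc) ** I13) ** e1 +++ (C a ** C c ** X) ** e2.
    by move=> e1 e2 -> ->; rewrite /Y; ring.
  have e1z : C 0 = fps_sub (K +++ sa ** K) sa by rewrite -hK fps_subrr.
  have e2z : C 0 = fps_sub (C 1 +++ (sa ** sc) ** I13) I13 by rewrite -hI fps_subrr.
  by rewrite (key _ _ e1z e2z); ring.
have g0 : ((C 1 +++ sc) ** K) 0%N = 0 by rewrite mul0 K0 mulr0.
have hL : L = Y := fps_uniq g0 eL eY.
rewrite /Egf; cbv zeta; rewrite /S_z -/sa -/sb -/sc Rgf_D1 hA eQ hL /Y /I13; norm; ring.
Qed.


Lemma theorem9_aux (x y u v : R) :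
  [/\ Igf x y u v =
        fps_add (fps_mono (x * y * u * v) 1)
                (fps_mul (Egf x y u) (S_yuv y u v)),
      Rgf x y u v = fps_mul (Egf y x v) (S_xuv x u v)
    & Sgf x y u v =
        fps_add (fps_mono (x * y * u * v) 1)
          (fps_add (fps_mul (Egf x y u) (S_yuv y u v))
                   (fps_mul (Egf y x v) (S_xuv x u v)))].
Proof.
have T1 : Igf x y u v = fps_add (fps_mono (x * y * u * v) 1)
                (fps_mul (Egf x y u) (S_yuv y u v)).
  rewrite Igf_dec D2 E_id /S_yuv; norm; ring.
have T2 : Rgf x y u v = fps_mul (Egf y x v) (S_xuv x u v).
  rewrite {1}Rgf_D1 -Rgf_rev E_id /S_xuv; norm; ring.
split => //; rewrite Sgf_IR T1 T2; ring.
Qed.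

End Final.

Open Scope ring_scope.
Theorem theorem9 (R : comRingType) (x y u v : R) :
  [/\ Igf x y u v =
        fps_add (fps_mono (x * y * u * v) 1)
                (fps_mul (Egf x y u) (S_yuv y u v)),
      Rgf x y u v = fps_mul (Egf y x v) (S_xuv x u v)
    & Sgf x y u v =
        fps_add (fps_mono (x * y * u * v) 1)
          (fps_add (fps_mul (Egf x y u) (S_yuv y u v))
                   (fps_mul (Egf y x v) (S_xuv x u v)))].
Proof. exact: theorem9_aux. Qed.
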